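(* Let $A\in\mathbb{R}^{n\times n}$, $V=\{v_1,\ldots,v_n\}$, $T>0$ and $\epsilon>0$. For $S\subset V$ let $B(S)=\mathrm{diag}(\mathbf{1}(S))$, let $W_T(S)=\int_0^T e^{A\tau}B(S)B(S)^\top e^{A^\top\tau}\,d\tau$, and let $F(S)=\mathrm{tr}\big((W_T(S)+\epsilon I)^{-1}\big)$. Then $F$ is strictly decreasing: for all $S_1\subsetneqq S_2\subset V$, $F(S_2)<F(S_1)$.
   Context: $\mathbf{1}(S)\in\mathbb{R}^n$ is the vector whose $i$th entry is $1$ if $v_i\in S$ and $0$ otherwise, so $B(S)$ is the diagonal $0/1$ matrix selecting the coordinates indexed by $S$; this corresponds to the control system $\dot x=Ax+B(S)u$. $W_T(S)$ is its controllability Gramian on $[0,T]$. *)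

(* Defs.v *)
From mathcomp Require Import all_boot all_order all_algebra.
From mathcomp Require Import all_classical all_reals all_analysis.
Set Implicit Arguments. Unset Strict Implicit. Unset Printing Implicit Defensive.
Import Order.TTheory GRing.Theory Num.Theory.
Import numFieldNormedType.Exports.
Local Open Scope ring_scope.
Local Open Scope classical_set_scope.

Section Defs.
Variables (R : realType) (n : nat).

Definition expmx (M : 'M[R]_n) : 'M[R]_n :=
  \matrix_(i, j) limn (series (fun k : nat => (k`!%:R)^-1 * (M ^+ k) i j)).

Definition Bsel (S : {set 'I_n}) : 'M[R]_n :=
  diag_mx (\row_i (if i \in S then 1 else 0)).

Definition gramian (A : 'M[R]_n) (T : R) (S : {set 'I_n}) : 'M[R]_n :=
  \matrix_(i, j) Rintegral lebesgue_measure `[0, T]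
     (fun tau : R => (expmx (tau *: A) *m Bsel S *m (Bsel S)^T
                        *m expmx (tau *: A^T)) i j).

Definition Fobj (A : 'M[R]_n) (T eps : R) (S : {set 'I_n}) : R :=
  \tr (invmx (gramian A T S + eps%:M)).

End Defs.

(* Main.v *)
Require Import Defs.
From mathcomp Require Import all_boot all_order all_algebra.
From mathcomp Require Import all_classical all_reals all_analysis.
From mathcomp Require Import measurable_realfun lebesgue_integral.
From mathcomp Require Import ring lra.
Import Order.TTheory GRing.Theory Num.Theory.
Import numFieldNormedType.Exports.
Set Implicit Arguments. Unset Strict Implicit. Unset Printing Implicit Defensive.
Local Open Scope ring_scope.
Local Open Scope classical_set_scope.

Section LA.
Variables (R : realFieldType) (n : nat).
Implicit Types (M N : 'M[R]_n) (u v x y : 'rV[R]_n).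

Definition qf M u : R := (u *m M *m u^T) 0 0.

Lemma qfE M u : qf M u = \sum_a \sum_b u 0 a * M a b * u 0 b.
Proof.
rewrite /qf mxE exchange_big /=; apply: eq_bigr => b _.
rewrite mxE mulr_suml; apply: eq_bigr => a _; rewrite !mxE.
by [].
Qed.

Definition psd M := forall u, 0 <= qf M u.
Definition symm M := forall a b, M a b = M b a.

Lemma qfD M N u : qf (M + N) u = qf M u + qf N u.
Proof. by rewrite /qf mulmxDr mulmxDl mxE. Qed.

Lemma qf_scalar (e : R) u : qf e%:M u = e * \sum_a u 0 a ^+ 2.
Proof.
rewrite qfE mulr_sumr; apply: eq_bigr => a _.
rewrite (bigD1 a) //= big1 ?addr0; last first.
  by move=> b /negPf ba; rewrite mxE eq_sym ba mulr0 mul0r.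
by rewrite mxE eqxx mulr1n; ring.
Qed.

Lemma sumsq_eq0 u : \sum_a u 0 a ^+ 2 = 0 -> u = 0.
Proof.
move=> /eqP; rewrite psumr_eq0 => [/allP H|a _]; last exact: sqr_ge0.
apply/rowP => a; rewrite mxE.
by have /(_ (mem_index_enum a))/implyP/(_ isT)/eqP/eqP := H a; rewrite sqrf_eq0 => /eqP.
Qed.


Definition bf M x y : R := \sum_a \sum_b x 0 a * M a b * y 0 b.

Lemma bfC M x y : symm M -> bf M y x = bf M x y.
Proof.
move=> sM; rewrite /bf exchange_big; apply: eq_bigr => a _.
by apply: eq_bigr => b _; rewrite sM; ring.
Qed.

Lemma qf_sub M x y t : symm M ->
  qf M (x - t *: y) = qf M x - 2 * t * bf M x y + t ^+ 2 * qf M y.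
Proof.
move=> sM; rewrite !qfE.
have -> : bf M x y = (bf M x y + bf M y x) / 2.
  by rewrite bfC //; field.
rewrite /bf.
have E1 : forall a, \sum_b (x - t *: y) 0 a * M a b * (x - t *: y) 0 b =
   \sum_b x 0 a * M a b * x 0 b - t * \sum_b x 0 a * M a b * y 0 b
   - t * \sum_b y 0 a * M a b * x 0 b + t ^+ 2 * \sum_b y 0 a * M a b * y 0 b.
  move=> a; rewrite !mulr_sumr -!sumrB -big_split /=; apply: eq_bigr => b _.
  rewrite !mxE; ring.
rewrite (eq_bigr _ (fun a _ => E1 a)) big_split /= !sumrB -!mulr_sumr.
by field.
Qed.

Lemma bf_mul M x : bf M x (x *m M) = \sum_b (x *m M) 0 b ^+ 2.
Proof.
rewrite /bf exchange_big; apply: eq_bigr => b _ /=.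
by rewrite -mulr_suml expr2; congr (_ * _); rewrite mxE.
Qed.

Lemma psd_null M x : symm M -> psd M -> qf M x = 0 -> x *m M = 0.
Proof.
move=> sM pM qx0.
apply: sumsq_eq0.
set a := \sum_b (x *m M) 0 b ^+ 2.
have a0 : 0 <= a by apply: sumr_ge0 => b _; exact: sqr_ge0.
set b := qf M (x *m M).
have b0 : 0 <= b := pM _.
set s := (b + 1)^-1.
have s0 : 0 < s by rewrite invr_gt0; lra.
have sE : s * (b + 1) = 1 by rewrite mulVf //; lra.
have := pM (x - (a * s) *: (x *m M)).
rewrite qf_sub // qx0 bf_mul -/a -/b => h.
have h2 : a * a * s * (1 + s) <= 0 by nra.
have h3 : 0 <= a * a * s * (1 + s).
  by apply: mulr_ge0; [apply: mulr_ge0; [nra|lra]|lra].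
have h4 : a * a * s * (1 + s) = 0 by lra.
move/eqP: h4; rewrite !mulf_eq0 => /orP[/orP[/orP[]|]|] /eqP; try lra.
Qed.


Lemma symmT M : symm M -> M^T = M.
Proof. by move=> sM; apply/matrixP => a b; rewrite mxE sM. Qed.

Lemma psdD M N : psd M -> psd N -> psd (M + N).
Proof. by move=> pM pN u; rewrite qfD addr_ge0. Qed.

Lemma symmD M N : symm M -> symm N -> symm (M + N).
Proof. by move=> sM sN a b; rewrite !mxE sM sN. Qed.

Lemma symm_scalar (e : R) : symm e%:M.
Proof. by move=> a b; rewrite !mxE eq_sym. Qed.

Lemma pd_unit M e : 0 < e -> psd M -> M + e%:M \in unitmx.
Proof.
move=> e0 pM; rewrite -row_free_unit -kermx_eq0; apply/rowV0P => v /sub_kermxP hv.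
have : qf (M + e%:M) v = 0 by rewrite /qf hv mul0mx mxE.
rewrite qfD qf_scalar => h.
have s0 : 0 <= \sum_a v 0 a ^+ 2 by apply: sumr_ge0 => a _; exact: sqr_ge0.
have := pM v => q0.
apply: sumsq_eq0; nra.
Qed.

Lemma trace_quad M (Z : 'M[R]_n) :
  \tr (Z^T *m M *m Z) = \sum_j qf M (row j Z^T).
Proof.
rewrite /mxtrace; apply: eq_bigr => j _; rewrite qfE exchange_big /= mxE.
apply: eq_bigr => b _; rewrite mxE mulr_suml; apply: eq_bigr => a _.
by rewrite !mxE.
Qed.

Lemma psd_inv M : symm M -> M \in unitmx -> psd M -> psd (invmx M).
Proof.
move=> sM uM pM x.
have PT : (invmx M)^T = invmx M by rewrite trmx_inv symmT.
have := pM (x *m invmx M); rewrite /qf trmx_mul PT.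
by rewrite !mulmxA -(mulmxA x (invmx M) M) mulVmx // mulmx1.
Qed.

Lemma tr_strict W Dm e i : 0 < e -> symm W -> psd W -> symm Dm -> psd Dm ->
  0 < Dm i i -> \tr (invmx (W + Dm + e%:M)) < \tr (invmx (W + e%:M)).
Proof.
move=> e0 sW pW sD pD Dii.
set X := W + e%:M.
set Y := W + Dm + e%:M.
have uX : X \in unitmx by exact: pd_unit.
have uY : Y \in unitmx by apply: pd_unit => //; exact: psdD.
have sX : symm X by apply: symmD => //; exact: symm_scalar.
have sY : symm Y by apply: symmD; [exact: symmD | exact: symm_scalar].
have pX : psd X by apply: psdD => // u; rewrite qf_scalar; apply: mulr_ge0; [lra|apply: sumr_ge0 => a _; exact: sqr_ge0].
have DE : Dm = Y - X.
  by apply/eqP; rewrite eq_sym subr_eq /Y /X addrAC addrC.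
set P := invmx X.
set Q := invmx Y.
have PT : P^T = P by rewrite trmx_inv symmT.
have QT : Q^T = Q by rewrite trmx_inv symmT.
have DT : Dm^T = Dm by rewrite symmT.
have pP : psd P by exact: psd_inv.
have QDP : Q *m Dm *m P = P - Q.
  by rewrite DE mulmxBr mulmxBl mulVmx // mul1mx -mulmxA mulmxV // mulmx1.
have PDQ : P *m Dm *m Q = P - Q.
  by rewrite DE mulmxBr mulmxBl -mulmxA mulmxV // mulmx1 mulVmx // mul1mx.
have key : P - Q = Q^T *m Dm *m Q + (Dm *m Q)^T *m P *m (Dm *m Q).
  rewrite QT trmx_mul QT DT.
  have -> : Q *m Dm *m P *m (Dm *m Q) = Q *m Dm *m (P *m Dm *m Q) by rewrite !mulmxA.
  by rewrite PDQ mulmxBr QDP [RHS]addrC subrK.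
have S2 : 0 <= \tr ((Dm *m Q)^T *m P *m (Dm *m Q)).
  by rewrite trace_quad; apply: sumr_ge0 => j _; exact: pP.
have S1 : 0 < \tr (Q^T *m Dm *m Q).
  rewrite trace_quad lt_neqAle; apply/andP; split; last first.
    by apply: sumr_ge0 => j _; exact: pD.
  rewrite eq_sym; apply/negP => /eqP S0.
  have h0 := psumr_eq0P (fun j _ => pD (row j Q^T)) S0.
  have QD0 : Q *m Dm = 0.
    apply/row_matrixP => j; rewrite row_mul row0.
    have := psd_null sD pD (h0 j isT); rewrite QT.
    by [].
  have : Dm = 0.
    by rewrite -[Dm]mul1mx -(mulmxV uY) -mulmxA QD0 mulmx0.
  by move=> D0; move: Dii; rewrite D0 mxE ltxx.
have : \tr (P - Q) = \tr P - \tr Q by rewrite raddfB.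
rewrite key mxtraceD => h.
have : 0 < \tr P - \tr Q by rewrite -h; lra.
rewrite subr_gt0 /P /Q /X /Y => //.
Qed.

End LA.

Section Series.
Variables (R : realType) (n : nat).

Definition cnorm (M : 'M[R]_n) : R := \sum_a \sum_b `|M a b|.

Lemma cnorm_ge0 M : 0 <= cnorm M.
Proof. by apply: sumr_ge0 => a _; apply: sumr_ge0. Qed.

Lemma col_le_cnorm (M : 'M[R]_n) j : \sum_l `|M l j| <= cnorm M.
Proof.
apply: ler_sum => l _.
by rewrite (bigD1 j) //= lerDl; apply: sumr_ge0.
Qed.

Lemma pow_bound (M : 'M[R]_n) k i j : `|(M ^+ k) i j| <= cnorm M ^+ k.
Proof.
elim: k i j => [|k IH] i j.
  rewrite expr0 /= mxE; case: (i == j) => /=; by rewrite ?normr1 ?normr0.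
rewrite exprSr -mulmxE mxE exprSr.
apply: (le_trans (ler_norm_sum _ _ _)).
apply: (@le_trans _ _ (\sum_l cnorm M ^+ k * `|M l j|)).
  apply: ler_sum => l _; rewrite normrM; apply: ler_wpM2r => //.
rewrite -mulr_sumr; apply: ler_wpM2l; first exact: exprn_ge0 (cnorm_ge0 M).
exact: col_le_cnorm.
Qed.

Lemma series_dom (f g : R ^nat) : (forall k, `|f k| <= g k) ->
  cvgn (series g) -> cvgn (series f) /\ `|limn (series f)| <= limn (series g).
Proof.
move=> fg cg.
have cn : cvgn [normed series f].
  apply: (series_le_cvg _ _ fg cg) => k //; exact: le_trans (fg k).
split; first exact: normed_cvg.
apply: (le_trans (lim_series_norm cn)).
exact: lim_series_le.
Qed.

Definition eterm (M : 'M[R]_n) i j : R ^nat :=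
  fun k => (k`!%:R)^-1 * (M ^+ k) i j.

Lemma eterm_bound M i j k : `|eterm M i j k| <= exp_coeff (cnorm M) k.
Proof.
rewrite /eterm exp_coeffE normrM ger0_norm ?invr_ge0 //.
apply: ler_wpM2l; first by rewrite invr_ge0.
exact: pow_bound.
Qed.

Lemma expmxE M i j : expmx M i j = limn (series (eterm M i j)).
Proof. by rewrite mxE. Qed.

Lemma eterm_cvg M i j : cvgn (series (eterm M i j)).
Proof.
have [] := @series_dom _ _ (eterm_bound M i j) (is_cvg_series_exp_coeff _) => //.
Qed.

Lemma expmx_bound M i j : `|expmx M i j| <= expR (cnorm M).
Proof.
rewrite expmxE.
have [_] := @series_dom _ _ (eterm_bound M i j) (is_cvg_series_exp_coeff _) => //.
Qed.

Definition d0 (a : R) : R ^nat := fun k => if k == 0%N then a else 0.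

Lemma series_d0 a : cvgn (series (d0 a)) /\ limn (series (d0 a)) = a.
Proof.
have h : \forall N \near \oo, series (d0 a) N = a.
  exists 1%N => // [[|N]] //= _; rewrite seriesEnat /= big_nat_recl //= big1 ?addr0 //.
have c : series (d0 a) @ \oo --> a by apply: cvg_near_cst.
split; first exact: (cvgP a c).
exact: cvg_lim.
Qed.

Lemma subfE (f g : R ^nat) k : (f - g) k = f k - g k.
Proof. by []. Qed.

Lemma expmx_tail M i j :
  `|expmx M i j - (i == j)%:R| <= expR (cnorm M) - 1.
Proof.
have [cd ld] := series_d0 (i == j)%:R.
have [ce le] := series_d0 1.
have h : forall k, `|(eterm M i j - d0 (i == j)%:R) k|
     <= (exp_coeff (cnorm M) - d0 1) k.
  move=> [|k] /=.
    rewrite !subfE /eterm /d0 /= exp_coeffE /= !expr0 mxE invr1 !mul1r subrr.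
    by rewrite normr0 subrr.
  rewrite !subfE /d0 /= !subr0; exact: eterm_bound.
have [_] := @series_dom _ _ h (is_cvg_seriesB (is_cvg_series_exp_coeff _) ce).
rewrite !lim_seriesB ?eterm_cvg ?is_cvg_series_exp_coeff //.
set L1 := limn (series (d0 (i == j)%:R)).
set L2 := limn (series (d0 1)).
have -> : L1 = (i == j)%:R by rewrite /L1; case: (series_d0 (i == j)%:R).
have -> : L2 = 1 by rewrite /L2; case: (series_d0 1).
by rewrite expmxE. exact: is_cvg_series_exp_coeff. exact: eterm_cvg.
Qed.

End Series.

Section Integ.
Variables (R : realType) (n : nat) (A : 'M[R]_n) (T : R).
Hypothesis T0 : 0 < T.

Local Notation D := (`[0, T] : set R).
Local Notation mu := (@lebesgue_measure R).
Local Notation E t := (expmx (t *: A)).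

Lemma cnormZ t : cnorm (t *: A) = `|t| * cnorm A.
Proof.
rewrite /cnorm mulr_sumr; apply: eq_bigr => a _.
rewrite mulr_sumr; apply: eq_bigr => b _.
by rewrite mxE normrM.
Qed.

Lemma E_bound t i j : `|E t i j| <= expR (`|t| * cnorm A).
Proof. by rewrite -cnormZ; exact: expmx_bound. Qed.

Lemma E_tail t i : `|E t i i - 1| <= expR (`|t| * cnorm A) - 1.
Proof. by rewrite -cnormZ; have := expmx_tail (t *: A) i i; rewrite eqxx. Qed.

Lemma exprZmx t (M : 'M[R]_n) k : (t *: M) ^+ k = t ^+ k *: M ^+ k.
Proof.
elim: k => [|k IH]; first by rewrite !expr0 scale1r.
by rewrite !exprS -!mulmxE IH -scalemxAl -scalemxAr scalerA.
Qed.

Lemma etermZ t i j k : eterm (t *: A) i j k = (k`!%:R)^-1 * (A ^+ k) i j * t ^+ k.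
Proof. by rewrite /eterm exprZmx mxE [t ^+ k * _]mulrC mulrA. Qed.

Lemma E_meas (i j : 'I_n) : measurable_fun setT (fun t : R => E t i j).
Proof.
have H := @measurable_realfun.measurable_fun_cvg _ R R setT
  (fun m t => series (eterm (t *: A) i j) m) (fun t => E t i j).
apply: H.
  elim=> [|m IH].
    have -> : (fun t => series (eterm (t *: A) i j) 0) = fun=> 0.
      by apply/funext => t; rewrite seriesEnat /= big_geq.
    exact: measurable_cst.
  have -> : (fun t => series (eterm (t *: A) i j) m.+1) =
     (fun t => series (eterm (t *: A) i j) m + (m`!%:R)^-1 * (A ^+ m) i j * t ^+ m).
    by apply/funext => t; rewrite seriesSr etermZ.
  apply: measurable_realfun.measurable_funD => //.
  apply: measurable_realfun.measurable_funM => //; exact: measurable_cst.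
move=> t _; rewrite expmxE; exact: eterm_cvg.
Qed.

Definition good (h : R -> R) :=
  measurable_fun setT h /\ exists M, forall t, D t -> `|h t| <= M.

Lemma good_integrable h : good h -> mu.-integrable D (EFin \o h).
Proof.
move=> [mh [M hM]].
apply: measurable_bounded_integrable => //.
- have hm := @lebesgue_measure_itv R `[0, T]%R; rewrite /= lte_fin T0 /= in hm.
  exact: (eq_ind _ (fun x => (x < +oo)%E) (ltry (T - 0)) _ (esym hm)).
- exact: measurable_funS mh.
- apply: filterS (nbhs_pinfty_ge (num_real M)) => M' MM' x Dx.
  exact: le_trans (hM x Dx) MM'.
Qed.

Lemma good_cst c : good (fun=> c).
Proof. by split; [exact: measurable_cst | exists `|c|]. Qed.

Lemma good_add f g : good f -> good g -> good (fun t => f t + g t).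
Proof.
move=> [mf [M1 h1]] [mg [M2 h2]]; split; first exact: measurable_realfun.measurable_funD.
exists (M1 + M2) => t Dt; apply: le_trans (ler_normD _ _) _.
by apply: lerD; [exact: h1 | exact: h2].
Qed.

Lemma good_mul f g : good f -> good g -> good (fun t => f t * g t).
Proof.
move=> [mf [M1 h1]] [mg [M2 h2]]; split; first exact: measurable_realfun.measurable_funM.
exists (M1 * M2) => t Dt; rewrite normrM.
by apply: ler_pM => //; [exact: h1 | exact: h2].
Qed.

Lemma good_sum (I : Type) (s : seq I) (P : pred I) (h : I -> R -> R) :
  (forall i, P i -> good (h i)) -> good (fun t => \sum_(i <- s | P i) h i t).
Proof.
move=> gh; elim: s => [|a s IH].
  have -> : (fun t => \sum_(i <- [::] | P i) h i t) = fun=> 0.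
    by apply/funext => t; rewrite big_nil.
  exact: good_cst.
have -> : (fun t => \sum_(i <- a :: s | P i) h i t) =
   fun t => (if P a then h a t else 0) + \sum_(i <- s | P i) h i t.
  by apply/funext => t; rewrite big_cons; case: (P a); rewrite ?add0r.
apply: good_add => //; case: (P a) (gh a) => [H|_]; [exact: H | exact: good_cst].
Qed.

Lemma Rintegral_sum (I : Type) (s : seq I) (P : pred I) (h : I -> R -> R) :
  (forall i, P i -> good (h i)) ->
  \int[mu]_(t in D) (\sum_(i <- s | P i) h i t) =
  \sum_(i <- s | P i) \int[mu]_(t in D) h i t.
Proof.
move=> gh; elim: s => [|a s IH].
  have -> : (fun t => \sum_(i <- [::] | P i) h i t) = fun=> 0.
    by apply/funext => t; rewrite big_nil.
  by rewrite big_nil Rintegral_cst // mul0r.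
rewrite big_cons.
have -> : (fun t => \sum_(i <- a :: s | P i) h i t) =
   fun t => (if P a then h a t else 0) + \sum_(i <- s | P i) h i t.
  by apply/funext => t; rewrite big_cons; case: (P a); rewrite ?add0r.
rewrite RintegralD //; last 2 first.
- by apply: good_integrable; case: (P a) (gh a) => [H|_]; [exact: H | exact: good_cst].
- exact/good_integrable/good_sum.
rewrite IH; case: (P a) => //.
by rewrite Rintegral_cst // mul0r add0r.
Qed.

Lemma good_E i j : good (fun t => E t i j).
Proof.
split; first exact: E_meas.
exists (expR (T * cnorm A)) => t; rewrite /= in_itv /= => /andP[t0 tT].
apply: le_trans (E_bound t i j) _; rewrite ler_expR ger0_norm //.
by apply: ler_wpM2r => //; exact: cnorm_ge0.
Qed.


Definition w (S : {set 'I_n}) k : R := if k \in S then 1 else 0.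
Definition Ik i j k : R := \int[mu]_(t in D) (E t i k * E t j k).

Lemma pow_tr (M : 'M[R]_n) k : (M^T) ^+ k = (M ^+ k)^T.
Proof.
elim: k => [|k IH]; first by rewrite !expr0; apply/matrixP => a b; rewrite !mxE eq_sym.
by rewrite exprS exprSr -!mulmxE IH trmx_mul.
Qed.

Lemma expmx_tr (M : 'M[R]_n) : expmx (M^T) = (expmx M)^T.
Proof.
apply/matrixP => a b; rewrite [RHS]mxE !expmxE.
have -> : eterm M^T a b = eterm M b a.
  by apply/funext => k; rewrite /eterm pow_tr mxE.
by [].
Qed.

Lemma BselBT (S : {set 'I_n}) : Bsel R S *m (Bsel R S)^T = Bsel R S :> 'M[R]_n.
Proof.
rewrite /Bsel tr_diag_mx mulmx_diag; congr diag_mx; apply/rowP => k.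
by rewrite !mxE; case: (k \in S); rewrite ?mulr1 ?mulr0.
Qed.

Lemma integrandE t S i j :
  (E t *m Bsel R S *m (Bsel R S)^T *m expmx (t *: A^T)) i j =
  \sum_k w S k * (E t i k * E t j k).
Proof.
have -> : t *: A^T = (t *: A)^T by apply/matrixP => a b; rewrite !mxE.
rewrite expmx_tr -(mulmxA (E t)) BselBT /Bsel mul_mx_diag mxE.
apply: eq_bigr => k _; rewrite !mxE /w.
by rewrite mulrAC mulrC.
Qed.

Lemma gramianE S i j : gramian A T S i j = \sum_k w S k * Ik i j k.
Proof.
rewrite /gramian mxE.
have -> : (fun t => (E t *m Bsel R S *m (Bsel R S)^T *m expmx (t *: A^T)) i j) =
  (fun t => \sum_k w S k * (E t i k * E t j k)).
  by apply/funext => t; rewrite integrandE.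
rewrite Rintegral_sum; last first.
  move=> k _; apply: good_mul; first exact: good_cst.
  by apply: good_mul; exact: good_E.
apply: eq_bigr => k _; rewrite RintegralZl //.
by apply: good_integrable; apply: good_mul; exact: good_E.
Qed.


Lemma mconvE (D' : set R) (f : R -> \bar R) :
  measurable_fun D' f -> @measurable_fun _ _ (measurableTypeR R) _ D' f.
Proof. move=> mf; exact: mf. Qed.

Lemma expR_small (x : R) : 0 <= x -> x <= 1/3 -> expR x <= 3/2.
Proof.
move=> x0 x3.
have h1 := expR_ge1Dx (- x).
have h2 := expRxMexpNx_1 x.
have h3 := expR_gt0 x.
move: h1 h2 h3; set e := expR x; set f := expR (- x) => h1 h2 h3.
nra.
Qed.

Lemma Ik_pos i : 0 < Ik i i i.
Proof.
set c := cnorm A.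
have c0 : 0 <= c := cnorm_ge0 A.
set u := (3 * (c + 1))^-1.
have u0 : 0 < u by rewrite invr_gt0; lra.
have uE : u * (3 * (c + 1)) = 1 by rewrite mulVf //; lra.
set d := Num.min T u.
have dT : d <= T by rewrite ge_min lexx.
have du : d <= u by rewrite ge_min lexx orbT.
have d0 : 0 < d by rewrite lt_min T0 u0.
set g := fun t => E t i i * E t i i.
have gE : forall t, 0 <= t <= d -> 1/4 <= g t.
  move=> t /andP[t0 td].
  have tc : `|t| * c <= 1/3 by rewrite ger0_norm //; nra.
  have := E_tail t i; have := expR_small (mulr_ge0 (normr_ge0 t) c0) tc.
  rewrite /g; set y := E t i i => h1 h2.
  have : 1/2 <= y.
    move: h2; rewrite ler_norml => /andP[h2 _]; lra.
  nra.
have gg : good g by apply: good_mul; exact: good_E.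
have mg : measurable_fun setT (fun t : R => (g t)%:E) by apply/measurable_EFinP; case: gg.
have g0 : forall t, 0 <= g t by move=> t; rewrite /g -expr2 sqr_ge0.
rewrite /Ik -/g /Rintegral.
set X := (\int[mu]_(t in D) (g t)%:E)%E.
have fin : X \is a fin_num.
  by apply: integrable_fin_num (good_integrable gg).
set Dd := (`[0, d] : set R).
have H2 : (\int[mu]_(t in Dd) (g t)%:E <= X)%E.
  apply: ge0_subset_integral => //.
  - by rewrite /Dd; exact: measurable_itv.
  - by apply: mconvE; exact: measurable_funTS mg.
  - by move=> t _; rewrite lee_fin.
  - move=> t; rewrite /Dd /= !in_itv /= => /andP[-> td] /=.
    exact: le_trans td dT.
have H1 : ((1/4 * d)%:E <= \int[mu]_(t in Dd) (g t)%:E)%E.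
  have H3 : (\int[mu]_(t in Dd) (cst (1/4)%:E) t <= \int[mu]_(t in Dd) (g t)%:E)%E.
    apply: ge0_le_integral => //.
    - by rewrite /Dd; exact: measurable_itv.
    - by move=> t _; rewrite /= lee_fin; lra.
    - by apply: mconvE; exact: measurable_funTS mg.
  move: H3; rewrite integral_cst; last by rewrite /Dd; exact: measurable_itv.
  have hm := @lebesgue_measure_itv R `[0, d]%R; rewrite /= lte_fin d0 /= in hm.
  have hm' : (@lebesgue_measure R Dd = d%:E)%E.
    by rewrite -[RHS](_ : (d%:E + (- 0)%:E)%E = d%:E); [exact: hm | rewrite oppr0 adde0].
  move=> H; apply: le_trans H; rewrite le_eqVlt; apply/orP; left; apply/eqP.
  rewrite EFinM; congr (_ * _)%E; symmetry; exact: hm'.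
have hX := le_trans H1 H2.
rewrite -(fineK fin) lee_fin in hX.
apply: lt_le_trans hX; lra.
Qed.


Definition Imat k : 'M[R]_n := \matrix_(i, j) Ik i j k.
Definition Mw (c : 'I_n -> R) : 'M[R]_n := \sum_k c k *: Imat k.

Lemma MwE c i j : Mw c i j = \sum_k c k * Ik i j k.
Proof. by rewrite /Mw summxE; apply: eq_bigr => k _; rewrite !mxE. Qed.

Lemma gramian_Mw S : gramian A T S = Mw (w S).
Proof. by apply/matrixP => i j; rewrite MwE gramianE. Qed.

Lemma Ik_sym i j k : Ik i j k = Ik j i k.
Proof.
rewrite /Ik; congr Rintegral; apply/funext => t; exact: mulrC.
Qed.

Lemma Ik_ge0 i k : 0 <= Ik i i k.
Proof. by apply: Rintegral_ge0 => t _; rewrite -expr2 sqr_ge0. Qed.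

Lemma Mw_symm c : symm (Mw c).
Proof. by move=> a b; rewrite !MwE; apply: eq_bigr => k _; rewrite Ik_sym. Qed.

Lemma qf_sum (F : 'I_n -> 'M[R]_n) u : qf (\sum_k F k) u = \sum_k qf (F k) u.
Proof.
apply: (big_morph (fun M : 'M[R]_n => qf M u)) => [M N|]; first exact: qfD.
by rewrite /qf mulmx0 mul0mx mxE.
Qed.

Lemma qfZ (a : R) (M : 'M[R]_n) u : qf (a *: M) u = a * qf M u.
Proof. by rewrite /qf -scalemxAr -scalemxAl mxE. Qed.

Lemma Imat_psd k : psd (Imat k).
Proof.
move=> x; rewrite qfE.
have -> : \sum_a \sum_b x 0 a * Imat k a b * x 0 b =
   \int[mu]_(t in D) ((\sum_a x 0 a * E t a k) ^+ 2).
  have -> : (fun t => (\sum_a x 0 a * E t a k) ^+ 2) =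
     (fun t => \sum_a \sum_b (x 0 a * x 0 b) * (E t a k * E t b k)).
    apply/funext => t; rewrite expr2 mulr_suml; apply: eq_bigr => a _.
    rewrite mulr_sumr; apply: eq_bigr => b _; ring.
  rewrite Rintegral_sum; last first.
    move=> a _; apply: good_sum => b _; apply: good_mul; first exact: good_cst.
    by apply: good_mul; exact: good_E.
  apply: eq_bigr => a _; rewrite Rintegral_sum; last first.
    move=> b _; apply: good_mul; first exact: good_cst.
    by apply: good_mul; exact: good_E.
  apply: eq_bigr => b _; rewrite RintegralZl //; last first.
    by apply: good_integrable; apply: good_mul; exact: good_E.
  rewrite mxE /Ik; ring.
by apply: Rintegral_ge0 => t _; exact: sqr_ge0.
Qed.

Lemma Mw_psd c : (forall k, 0 <= c k) -> psd (Mw c).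
Proof.
move=> c0 x; rewrite /Mw qf_sum; apply: sumr_ge0 => k _.
by rewrite qfZ; apply: mulr_ge0 => //; exact: Imat_psd.
Qed.

Lemma Mw_diag c i : (forall k, 0 <= c k) -> 0 < c i -> 0 < Mw c i i.
Proof.
move=> c0 ci; rewrite MwE (bigD1 i) //=.
have h1 : 0 < c i * Ik i i i by apply: mulr_gt0 => //; exact: Ik_pos.
have h2 : 0 <= \sum_(k | k != i) c k * Ik i i k.
  by apply: sumr_ge0 => k _; apply: mulr_ge0 => //; exact: Ik_ge0.
lra.
Qed.

Lemma main_sec (eps : R) (S1 S2 : {set 'I_n}) : 0 < eps -> S1 \proper S2 ->
  Fobj A T eps S2 < Fobj A T eps S1.
Proof.
move=> e0 /properP [sub [i0 i0S2 i0S1]].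
set c := fun k => w S2 k - w S1 k.
have c0 : forall k, 0 <= c k.
  move=> k; rewrite /c /w; case: ifP => h2; case: ifP => h1 //; try lra.
  by move: (fintype.subsetP sub k h1); rewrite h2.
have ci : 0 < c i0 by rewrite /c /w i0S2 (negbTE i0S1); lra.
have G2 : gramian A T S2 = gramian A T S1 + Mw c.
  apply/matrixP => a b; rewrite gramianE [RHS]mxE gramianE MwE -big_split /=.
  by apply: eq_bigr => k _; rewrite /c; ring.
rewrite /Fobj G2 !gramian_Mw.
apply: tr_strict => //.
- exact: Mw_symm.
- by apply: Mw_psd => k; rewrite /w; case: ifP.
- exact: Mw_symm.
- exact: Mw_psd.
- exact: (Mw_diag c0 ci).
Qed.

End Integ.

Theorem lemma1 (R : realType) (n : nat) (A : 'M[R]_n) (T eps : R) :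
  0 < T -> 0 < eps ->
  forall S1 S2 : {set 'I_n}, S1 \proper S2 ->
    Fobj A T eps S2 < Fobj A T eps S1.
Proof. by move=> T0 e0 S1 S2 h; apply: main_sec. Qed.
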